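(* Label the hyperedges so that $|h_1|\le|h_2|\le\dots\le|h_M|$. If $N\ge2$ and $M\ge2$, then $$\lambda_{N-1}\le\max\{|h_M|-1,\ |h_{M-1}|\}.$$ More generally, for every integer $k$ with $1\le k\le\min(N,M)-1$, $$\lambda_{N-k}\le\max_{i=0,\dots,k}\bigl(|h_{M-i}|-k+i\bigr).$$
   Context: Let $\Gamma=(V,H,\mathcal C)$ be a hypergraph with real coefficients: $V=\{v_1,\dots,v_N\}$ is a finite set of vertices, $H=(h_1,\dots,h_M)$ is a finite family of non-empty subsets $h_j\subseteq V$ called hyperedges (repetitions allowed; hyperedges are distinguished by their index), and $\mathcal C=\{C_{v,h}\in\mathbb R\}$ is a family of real coefficients with $C_{v,h}=0$ if and only if $v\notin h$. Standing assumptions: every vertex lies in at least one hyperedge, and $\Gamma$ is connected. The degree of $v$ is $\deg v=\sum_{h\in H}C_{v,h}^2>0$. The vertex normalized Laplacian is $Lf(v)=\frac{1}{\deg v}\sum_{h\in H}C_{v,h}\sum_{w\in V}C_{w,h}f(w)$; its eigenvalues are $\lambda_1\le\dots\le\lambda_N$. The cardinality $|h|$ of a hyperedge is its number of vertices. *)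

(* Defs.v *)
From HB Require Import structures.
From mathcomp Require Import all_boot all_order all_algebra.
From mathcomp Require Import reals.
Set Implicit Arguments. Unset Strict Implicit. Unset Printing Implicit Defensive.
Import Order.TTheory GRing.Theory Num.Theory.
Local Open Scope ring_scope.

(* A hypergraph with real coefficients on vertices 'I_N and hyperedges 'I_M
   is encoded by its coefficient matrix C : 'M[R]_(N, M), C v h = C_{v,h};
   the hyperedge h is the set of vertices v with C v h != 0. *)

Definition hedge (R : realType) (N M : nat) (C : 'M[R]_(N, M)) (j : 'I_M)
  : {set 'I_N} := [set v | C v j != 0].

(* cardinalities |h_1|, ..., |h_M| as a (0-indexed) sequence *)
Definition hsizes (R : realType) (N M : nat) (C : 'M[R]_(N, M)) : seq nat :=
  [seq #|hedge C j| | j <- enum 'I_M].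

Definition hedges_nonempty (R : realType) (N M : nat) (C : 'M[R]_(N, M)) :=
  forall j : 'I_M, hedge C j != set0.

Definition vertices_covered (R : realType) (N M : nat) (C : 'M[R]_(N, M)) :=
  forall v : 'I_N, exists j : 'I_M, v \in hedge C j.

Definition hadj (R : realType) (N M : nat) (C : 'M[R]_(N, M)) : rel 'I_N :=
  fun v w => [exists j : 'I_M, (v \in hedge C j) && (w \in hedge C j)].

Definition hconnected (R : realType) (N M : nat) (C : 'M[R]_(N, M)) :=
  forall v w : 'I_N, connect (hadj C) v w.

Definition hdeg (R : realType) (N M : nat) (C : 'M[R]_(N, M)) (v : 'I_N) : R :=
  \sum_(j < M) C v j ^+ 2.

Definition vlaplacian (R : realType) (N M : nat) (C : 'M[R]_(N, M))
  : 'M[R]_N :=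
  \matrix_(v, w) ((hdeg C v)^-1 * \sum_(j < M) C v j * C w j).

(* lam is the nondecreasing list lambda_1 <= ... <= lambda_N of the
   eigenvalues of A, repeated according to (algebraic) multiplicity *)
Definition eigenvalue_list (R : realType) (N : nat) (A : 'M[R]_N)
  (lam : seq R) :=
  [/\ size lam = N, sorted <=%R lam &
      char_poly A = \prod_(x <- lam) ('X - x%:P)].

(* Main.v *)
Require Import Defs.
From HB Require Import structures.
From mathcomp Require Import all_boot all_order all_algebra.
From mathcomp Require Import reals.
From mathcomp Require Import complex sesquilinear spectral zify ring lra.
From Stdlib Require Import Lia.
Import Order.TTheory GRing.Theory Num.Theory.
Local Open Scope ring_scope.

Lemma cs_sum (R : numDomainType) (I : finType) (A : {set I}) (r : I -> R) :
  (forall u, 0 <= r u) ->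
  (\sum_(u in A) r u) ^+ 2 <= #|A|%:R * \sum_(u in A) r u ^+ 2.
Proof.
move=> r0.
set S1 := \sum_(u in A) r u; set S2 := \sum_(u in A) r u ^+ 2.
have inner u : \sum_(v in A) (r u - r v) ^+ 2 = r u ^+ 2 *+ #|A| - (r u * S1) *+ 2 + S2.
  rewrite (eq_bigr (fun v => r u ^+ 2 - r u * r v *+ 2 + r v ^+ 2)); last first.
    by move=> v _; rewrite sqrrB.
  by rewrite big_split sumrB sumr_const sumrMnl -mulr_sumr.
have D : \sum_(u in A) \sum_(v in A) (r u - r v) ^+ 2 = (#|A|%:R * S2 - S1 ^+ 2) *+ 2.
  rewrite (eq_bigr _ (fun u _ => inner u)) big_split sumrB sumr_const !sumrMnl.
  rewrite -mulr_suml -/S1 -/S2.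
  rewrite -[LHS]/(S2 *+ #|A| - S1 * S1 *+ 2 + S2 *+ #|A|).
  by rewrite mulrnBl mulr_natl expr2 mulr2n addrAC.
have : 0 <= (#|A|%:R * S2 - S1 ^+ 2) *+ 2.
  by rewrite -D; apply: sumr_ge0 => u _; apply: sumr_ge0 => v _; rewrite -realEsqr; apply: realB; apply: ger0_real.
by rewrite pmulrn_lge0 // subr_ge0.
Qed.

Local Open Scope sesquilinear_scope.

Lemma char_poly_conj (F : comNzRingType) n (A Q Q1 : 'M[F]_n) :
  Q1 *m Q = 1%:M -> char_poly (Q1 *m A *m Q) = char_poly A.
Proof.
move=> QQ; have QQ' := mulmx1C QQ.
rewrite /char_poly /char_poly_mx.
have -> : 'X%:M - map_mx polyC (Q1 *m A *m Q) =
   map_mx polyC Q1 *m ('X%:M - map_mx polyC A) *m map_mx polyC Q.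
  rewrite mulmxBr mulmxBl -!map_mxM; congr (_ - _).
  rewrite scalar_mxC mul_scalar_mx -scalemxAl -map_mxM QQ map_mx1.
  by rewrite -mul_scalar_mx mulmx1.
rewrite !det_mulmx mulrC mulrA -det_mulmx -map_mxM QQ' map_mx1 det1 mul1r.
by [].
Qed.

Lemma count_index_enum (T : finType) (p : pred T) : count p (index_enum T) = #|p|.
Proof. by rewrite cardE /enum_mem size_filter /index_enum unlock. Qed.


Lemma core (K : numClosedFieldType) n m (S : 'M[K]_n) (G : 'M[K]_(n, m))
  (c : K) (s : seq K) :
  S \is normalmx ->
  char_poly S = \prod_(x <- s) ('X - x%:P) ->
  (forall x : 'rV[K]_n, x *m G = 0 ->
     (x *m S *m x^t*) 0 0 <= c * (x *m x^t*) 0 0) ->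
  (count (fun x : K => (c < x)%R) s <= m)%N.
Proof.
move=> Snorm Schar Hq.
set P := spectralmx S; set d := spectral_diag S.
have SE : S = invmx P *m diag_mx d *m P by apply/orthomx_spectralP.
have Pu : P \is unitarymx := spectral_unitarymx S.
have PPt : P *m P^t* = 1%:M by apply/unitarymxP.
have PtP : P^t* *m P = 1%:M := mulmx1C PPt.
rewrite invmx_unitary // in SE.
have cpS : char_poly S = \prod_(x <- [seq d 0 i | i <- index_enum 'I_n]) ('X - x%:P).
  rewrite big_map SE char_poly_conj // char_poly_trig ?diag_mx_is_trig //.
  by apply: eq_bigr => i _; rewrite mxE eqxx mulr1n.
have /permP pe := prod_XsubC_eq (etrans (esym Schar) cpS).
rewrite pe count_map count_index_enum.
set I := preim _ _.
pose ev := fun t : 'I_#|I| => (enum_val t : 'I_n).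
pose V := rowsub ev P.
have Vu : V \is unitarymx.
  apply/row_unitarymxP => s1 s2; rewrite !row_rowsub.
  have /row_unitarymxP -> := Pu.
  by rewrite (inj_eq enum_val_inj).
have rV : \rank V = #|I| := mxrank_unitary Vu.
pose W := kermx G.
have rW : \rank W = (n - \rank G)%N := mxrank_ker G.
have rG : (\rank G <= m)%N := rank_leq_col G.
suff cap0 : (V :&: W)%MS = 0.
  have := mxrank_sum_cap V W; rewrite cap0 mxrank0 rV rW addn0.
  have := rank_leq_col (V + W)%MS; have := rank_leq_row G.
  move=> h1 h2 h3; rewrite h3 in h2; clear -h2 rG; move: h2 rG; set a := #|I|; set b := \rank G; move=> h2 rG; lia.
suff Hy : forall y : 'rV_n, (y <= V :&: W)%MS -> y = 0.
  apply/row_matrixP => i; rewrite row0; apply: Hy; exact: row_sub.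
move=> z; rewrite sub_capmx => /andP[/submxP[a ->] /sub_kermxP yG].
set y := a *m V in yG *.
have [e ee] : {e | e = y *m P^t*} by exists (y *m P^t*).
have ye : y = e *m P by rewrite ee -mulmxA PtP mulmx1.
have VP t j : (V *m P^t*) t j = (ev t == j)%:R.
  have /matrixP/(_ (ev t) j) := PPt; rewrite !mxE => <-.
  by apply: eq_bigr => k _; rewrite !mxE.
have eI j : j \notin I -> e 0 j = 0.
  move=> jI; rewrite ee /y -mulmxA mxE big1 // => t _.
  rewrite VP; case: eqP => [ej|]; last by rewrite mulr0.
  by move: jI; rewrite -ej enum_valP.
have yt : y^t* = P^t* *m e^t* by rewrite ye trmx_mul map_mxM.
have q1 : (y *m S *m y^t*) 0 0 = \sum_j e 0 j * d 0 j * (e 0 j)^*.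
  have -> : y *m S *m y^t* = e *m diag_mx d *m e^t*.
    rewrite yt {1}ye SE !mulmxA -(mulmxA e P) PPt mulmx1.
    by rewrite -!(mulmxA _ P) PPt !mulmx1.
  by rewrite mxE; apply: eq_bigr => j _; rewrite mul_mx_diag !mxE.
have q2 : (y *m y^t*) 0 0 = \sum_j e 0 j * (e 0 j)^*.
  have -> : y *m y^t* = e *m e^t*.
    by rewrite yt {1}ye !mulmxA -(mulmxA e P) PPt mulmx1.
  by rewrite mxE; apply: eq_bigr => j _; rewrite !mxE.
have H := Hq y yG; rewrite q1 q2 -subr_le0 mulr_sumr -sumrB in H.
pose T j := (d 0 j - c) * (e 0 j * (e 0 j)^*).
have T0 j : 0 <= T j.
  rewrite /T; case jI: (j \in I).
    apply: mulr_ge0; last exact: mul_conjC_ge0.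
    by rewrite subr_ge0 ltW //; move: jI; rewrite inE.
  by rewrite eI ?jI // mul0r mulr0.
have ST : \sum_j T j = 0.
  apply/le_anti/andP; split; last by apply: sumr_ge0 => j _.
  apply: le_trans H; rewrite le_eqVlt; apply/orP; left; apply/eqP.
  by apply: eq_bigr => j _; rewrite /T mulrBl mulrA [_ * d 0 j]mulrC mulrA.
have e0 : e = 0.
  apply/rowP => j; rewrite mxE.
  case jI: (j \in I); last by rewrite eI ?jI.
  have Tj : T j = 0 by apply: (psumr_eq0P _ ST) => // i _; apply: T0.
  move/eqP: Tj; rewrite /T mulf_eq0 mul_conjC_eq0 subr_eq0 => /orP[/eqP dc|/eqP //].
  by move: jI; rewrite inE /= dc ltxx.
by rewrite ye e0 mul0mx.
Qed.

Lemma restr_sum (K : numDomainType) n (A : {set 'I_n}) (F : 'I_n -> K) :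
  (forall u, u \notin A -> F u = 0) -> \sum_u F u = \sum_(u in A) F u.
Proof.
move=> F0; rewrite [RHS]big_mkcond; apply: eq_bigr => u _.
by case: ifP => // /negbT /F0.
Qed.

Lemma quad_bound (K : numClosedFieldType) n M (B : 'M[K]_(n, M))
  (h : 'I_M -> {set 'I_n}) (c : K) (Pk : pred 'I_M) (x : 'rV[K]_n) :
  0 <= c ->
  (forall u j, (B u j)^* = B u j) ->
  (forall u j, u \notin h j -> B u j = 0) ->
  (forall u, \sum_j B u j * B u j = 1) ->
  (forall j, ~~ Pk j -> #|h j|%:R <= c) ->
  (forall j, Pk j -> (x *m B) 0 j = 0) ->
  (x *m (B *m B^T) *m x^t*) 0 0 <= c * (x *m x^t*) 0 0.
Proof.
move=> c0 Bre Bh B1 hc xk.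
have BT : map_mx (@Num.conj K) B^T = B^T by apply/matrixP => i j; rewrite !mxE Bre.
have -> : x *m (B *m B^T) *m x^t* = (x *m B) *m (x *m B)^t*.
  by rewrite trmx_mul map_mxM BT !mulmxA.
have BB u j : 0 <= B u j * B u j by rewrite -{2}Bre mul_conjC_ge0.
have -> : c * (x *m x^t*) 0 0 =
    \sum_j c * \sum_u x 0 u * (x 0 u)^* * (B u j * B u j).
  rewrite -mulr_sumr mxE; congr (_ * _); rewrite exchange_big /=.
  by apply: eq_bigr => u _; rewrite -mulr_sumr B1 mulr1 !mxE.
rewrite mxE; apply: ler_sum => j _.
rewrite [((x *m B)^t*) j 0]mxE [(x *m B)^T j 0]mxE.
have rhs0 : 0 <= c * \sum_u x 0 u * (x 0 u)^* * (B u j * B u j).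
  by apply: mulr_ge0 => //; apply: sumr_ge0 => u _; apply: mulr_ge0; [exact: mul_conjC_ge0 | exact: BB].
case: (boolP (Pk j)) => Pj.
  by rewrite xk // mul0r.
rewrite -normCK mxE.
set r := fun u => `|x 0 u * B u j|.
have yr : `|\sum_u x 0 u * B u j| <= \sum_(u in h j) r u.
  rewrite (@restr_sum _ _ (h j)); first exact: ler_norm_sum.
  by move=> u /Bh ->; rewrite mulr0.
have r0 u : 0 <= r u by apply: normr_ge0.
have y2 : `|\sum_u x 0 u * B u j| ^+ 2 <= (\sum_(u in h j) r u) ^+ 2.
  by rewrite !expr2; apply: ler_pM.
have t2 := le_trans y2. apply: t2.
apply: le_trans (@cs_sum _ _ (h j) r r0) _.
rewrite (@restr_sum _ _ (h j)); last first.
  by move=> u /Bh ->; rewrite !mulr0.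
have -> : \sum_(u in h j) r u ^+ 2 =
    \sum_(u in h j) x 0 u * (x 0 u)^* * (B u j * B u j).
  by apply: eq_bigr => u _; rewrite /r normrM exprMn !normCK Bre.
apply: ler_wpM2r; last exact: hc.
by apply: sumr_ge0 => u _; apply: mulr_ge0; [exact: mul_conjC_ge0 | exact: BB].
Qed.

Lemma killed_lt (M k : nat) (t : 'I_k) : (k <= M)%N -> (M - k + t < M)%N.
Proof. move=> kM; have := ltn_ord t; lia. Qed.

Lemma hsizes_nth (R : realType) N M (C : 'M[R]_(N, M)) (j : 'I_M) :
  nth 0%N (hsizes C) j = #|hedge C j|.
Proof. by rewrite /hsizes (nth_map j) ?size_enum_ord ?ltn_ord // nth_ord_enum. Qed.

Lemma size_hsizes (R : realType) N M (C : 'M[R]_(N, M)) : size (hsizes C) = M.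
Proof. by rewrite /hsizes size_map size_enum_ord. Qed.

Lemma count_to_nth (R : realType) (lam : seq R) (c : R) N k :
  size lam = N -> sorted <=%R lam -> (k < N)%N ->
  (count (fun x : R => (c < x)%R) lam <= k)%N -> lam`_(N - k - 1) <= c.
Proof.
move=> sz so kN cnt; rewrite leNgt; apply/negP => clt.
have iN : (N - k - 1 < size lam)%N by rewrite sz; lia.
have alld : all (fun x => c < x) (drop (N - k - 1) lam).
  rewrite (drop_nth 0 iN) /= clt /=.
  have := drop_sorted (N - k - 1) so; rewrite (drop_nth 0 iN) /=.
  move=> /(order_path_min le_trans) /allP H; apply/allP => x /H.
  exact: lt_le_trans.
move: alld; rewrite all_count => /eqP cd.
have := count_cat (fun x : R => c < x) (take (N - k - 1) lam) (drop (N - k - 1) lam).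
rewrite cat_take_drop cd size_drop sz => H.
move: cnt; rewrite H; lia.
Qed.

Lemma main_k (R : realType) N M (C : 'M[R]_(N, M)) (lam : seq R) k :
  vertices_covered C -> sorted leq (hsizes C) ->
  eigenvalue_list (vlaplacian C) lam -> (k < M)%N -> (k < N)%N ->
  lam`_(N - k - 1) <= (nth 0%N (hsizes C) (M - 1 - k))%:R.
Proof.
move=> cov so [sz slam cp] kM kN.
apply: (count_to_nth _ _ _ _ _ sz slam kN).
have degp v : 0 < hdeg C v.
  have [j] := cov v; rewrite inE => Cvj.
  rewrite /hdeg (bigD1 j) //=.
  have h1 : 0 < C v j ^+ 2 by rewrite exprn_even_gt0.
  have h2 : 0 <= \sum_(i | i != j) C v i ^+ 2.
    by apply: sumr_ge0 => i _; apply: sqr_ge0.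
  lra.
pose s v := Num.sqrt (hdeg C v).
have sp v : 0 < s v by rewrite sqrtr_gt0.
have s2 v : s v ^+ 2 = hdeg C v by rewrite sqr_sqrtr // ltW.
have sn0 v : s v != 0 by rewrite gt_eqF.
pose B := \matrix_(v, j) (C v j / s v) : 'M[R]_(N, M).
pose E := diag_mx (\row_v s v) : 'M[R]_N.
pose E1 := diag_mx (\row_v (s v)^-1) : 'M[R]_N.
have EE : E1 *m E = 1%:M.
  apply/matrixP => v w; rewrite mul_diag_mx !mxE.
  by case: (v =P w) => [->|_]; rewrite ?mulr1n ?mulr0n ?mulr0 ?mulVf.
have LE : vlaplacian C = E1 *m (B *m B^T) *m E.
  apply/matrixP => v w; rewrite mul_mx_diag mul_diag_mx !mxE.
  rewrite !mulr_sumr mulr_suml; apply: eq_bigr => j _; rewrite !mxE.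
  rewrite -s2 expr2 invfM.
  have := sn0 v; have := sn0 w; move: (s v) (s w) => a b ha hb.
  by field; rewrite ha hb.
have cpS : char_poly (B *m B^T) = \prod_(x <- lam) ('X - x%:P).
  by rewrite -cp LE char_poly_conj.
pose toC : {rmorphism R -> R[i]} := real_complex R.
pose Bc := map_mx toC B.
have Sc : map_mx toC (B *m B^T) = Bc *m Bc^T by rewrite map_mxM map_trmx.
have cpSc : char_poly (Bc *m Bc^T) = \prod_(x <- map toC lam) ('X - x%:P).
  by rewrite -Sc -map_char_poly cpS map_prod_XsubC big_map.
have toCre r : (toC r)^* = toC r.
  by apply/CrealP/complex_realP; exists r.
have toCre' (r : R) : (real_complex R r)^* = real_complex R r := toCre r.
have Bre u j : (Bc u j)^* = Bc u j by rewrite mxE toCre.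
have Snorm : Bc *m Bc^T \is normalmx.
  have St : (Bc *m Bc^T)^t* = Bc *m Bc^T.
    rewrite trmx_mul trmxK map_mxM; apply/matrixP => u w; rewrite !mxE.
    by apply: eq_bigr => j _; rewrite !mxE; congr (_ * _); apply: toCre.
  by apply/normalmxP; rewrite St.
pose f := fun t : 'I_k => Ordinal (killed_lt M k t (ltnW kM)).
pose G := \matrix_(u, t) Bc u (f t) : 'M_(N, k).
set cR := (nth 0%N (hsizes C) (M - 1 - k))%:R : R.
pose cRc := (nth 0%N (hsizes C) (M - 1 - k))%:R : R[i].
have cnt : (count (fun x : R[i] => (cRc < x)%R) (map toC lam) <= k)%N.
  apply: (core _ _ _ _ G cRc _ Snorm cpSc) => x xG.
  apply: (quad_bound _ _ _ Bc (@hedge R N M C) cRc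
            (fun j : 'I_M => (M - k <= j)%N) x).
  - by rewrite ler0n.
  - exact: Bre.
  - move=> u j; rewrite inE negbK => /eqP C0.
    by rewrite !mxE C0 mul0r rmorph0.
  - move=> u; have B1 : \sum_j B u j * B u j = 1.
      rewrite (eq_bigr (fun j => C u j ^+ 2 * (s u ^+ 2)^-1)); last first.
        move=> j _; rewrite !mxE expr2 invfM.
        by have := sn0 u; move: (s u) => a ha; field; rewrite ha.
      by rewrite -mulr_suml s2 -/(hdeg C u) mulfV // gt_eqF.
    rewrite -(rmorph1 toC) -B1 rmorph_sum; apply: eq_bigr => j _.
    by rewrite rmorphM !mxE.
  - move=> j; rewrite -ltnNge => jl; rewrite ler_nat -hsizes_nth.
    have := ltn_ord j => jM.
    apply: (sorted_leq_nth leq_trans leqnn 0%N so); rewrite ?inE ?size_hsizes //; lia.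
  - move=> j jk; have tk : (j - (M - k) < k)%N by have := ltn_ord j; lia.
    pose t := Ordinal tk.
    have ft : f t = j by apply/val_inj => /=; lia.
    have -> : (x *m Bc) 0 j = (x *m G) 0 t.
      by rewrite !mxE; apply: eq_bigr => u _; rewrite !mxE ft.
    by rewrite xG mxE.
rewrite count_map in cnt.
apply: leq_trans cnt; rewrite leq_eqVlt; apply/orP; left; apply/eqP.
by apply: eq_count => a /=; rewrite /cRc -(rmorph_nat toC) ltcR.
Qed.

(* 1-indexed: lambda_i = lam`_(i-1), |h_i| = nth 0 (hsizes C) (i-1). *)
Theorem mainTheorem9 (R : realType) (N M : nat) (C : 'M[R]_(N, M))
  (lam : seq R) :
  hedges_nonempty C -> vertices_covered C -> hconnected C ->
  sorted leq (hsizes C) ->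
  eigenvalue_list (vlaplacian C) lam ->
  ((2 <= N)%N -> (2 <= M)%N ->
     lam`_(N - 2) <= Num.max ((nth 0 (hsizes C) (M - 1))%:R - 1)
                             (nth 0 (hsizes C) (M - 2))%:R)
  /\
  (forall k : nat, (1 <= k)%N -> (k <= minn N M - 1)%N ->
     lam`_(N - k - 1) <=
       \big[Num.max/0]_(i < k.+1)
          ((nth 0 (hsizes C) (M - 1 - i))%:R - k%:R + i%:R)).
Proof.
move=> hne cov conn so ev; split.
  move=> N2 M2; have H := main_k _ _ _ C lam 1 cov so ev M2 N2.
  have e1 : (N - 1 - 1 = N - 2)%N by lia.
  have e2 : (M - 1 - 1 = M - 2)%N by lia.
  rewrite e1 e2 in H; apply: (le_trans H).
  by rewrite le_max lexx orbT.
move=> k k1 kmin.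
have kM : (k < M)%N by lia.
have kN : (k < N)%N by lia.
have H := main_k _ _ _ C lam k cov so ev kM kN.
have := @le_bigmax _ _ _ (0 : R)
  (fun i : 'I_k.+1 => ((nth 0%N (hsizes C) (M - 1 - i))%:R - k%:R + i%:R : R)) ord_max.
rewrite /= subrK => H2; exact: le_trans H H2.
Qed.
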